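(* Assume (SM), (LIP), (POT) and consider the algorithm AILFEM of the context with arbitrary $\lambda_{\mathrm{lin}},\lambda_{\mathrm{alg}}>0$. Define $\tau:=M+3M(L[3M]/\alpha)^{1/2}\ (\ge4M)$. Let $k\in\mathbb{N}_0$ with $0\le k<\underline{k}[\ell]$ and $|||u_\ell^{k,\underline{i}}|||\le\tau$. Then, if $i_{\min}\in\mathbb{N}$ satisfies $q_{\mathrm{alg}}^{i_{\min}}\le1/3$ and $0<\delta<\min\{1/L[5\tau],\,2\alpha/L[2\tau]^2\}$, it holds that $$0\le\Big(\frac1{2\delta}-\frac{L[5\tau]}2\Big)|||u_\ell^{k+1,\underline{i}}-u_\ell^{k,\underline{i}}|||^2\le\mathcal{E}(u_\ell^{k,\underline{i}})-\mathcal{E}(u_\ell^{k+1,\underline{i}})\le\Big(\frac1{\delta(1-q_{\mathrm{alg}}^{i_{\min}})}-\frac\alpha2\Big)|||u_\ell^{k+1,\underline{i}}-u_\ell^{k,\underline{i}}|||^2$$ for all $(\ell,k+1,\underline{i})\in\mathcal{Q}$.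
   Context: Abstract setting. Let $\mathcal{X}$ be a real Hilbert space with scalar product $\langle\!\langle\cdot,\cdot\rangle\!\rangle$ and norm $|||\cdot|||$, with dual space $\mathcal{X}'$ (norm $\|\cdot\|_{\mathcal{X}'}$, duality bracket $\langle\cdot,\cdot\rangle$). Let $\mathcal{A}:\mathcal{X}\to\mathcal{X}'$ be a nonlinear operator and $F\in\mathcal{X}'$ with $\mathcal{A}0\neq F$. Conditions: (SM) there is $\alpha>0$ with $\alpha|||v-w|||^2\le\langle\mathcal{A}v-\mathcal{A}w,v-w\rangle$ for all $v,w\in\mathcal{X}$; (LIP) for every $\vartheta>0$ there is $L[\vartheta]>0$ with $\langle\mathcal{A}v-\mathcal{A}w,\varphi\rangle\le L[\vartheta]\,|||v-w|||\,|||\varphi|||$ for all $v,w,\varphi\in\mathcal{X}$ with $\max\{|||v|||,|||v-w|||\}\le\vartheta$; (POT) there is a Gâteaux differentiable $\mathcal{P}:\mathcal{X}\to\mathbb{R}$ with $\langle\mathcal{A}w,v\rangle=\lim_{t\to0}(\mathcal{P}(w+tv)-\mathcal{P}(w))/t$ for all $v,w$. The energy is $\mathcal{E}(v):=\mathcal{P}(v)-F(v)$. For every closed subspace $\mathcal{Y}\subseteq\mathcal{X}$ there is a unique $u^\star_{\mathcal{Y}}\in\mathcal{Y}$ with $\langle\mathcal{A}u^\star_{\mathcal{Y}},v\rangle=F(v)$ for all $v\in\mathcal{Y}$; $u^\star:=u^\star_{\mathcal{X}}$. Put $M:=\|F-\mathcal{A}0\|_{\mathcal{X}'}/\alpha$.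 Meshes. $\mathcal{T}_0$ is an initial conforming simplicial triangulation; $\mathtt{refine}(\mathcal{T}_H,\mathcal{M}_H)$ is the coarsest newest-vertex-bisection (NVB) refinement of $\mathcal{T}_H$ in which all elements of $\mathcal{M}_H\subseteq\mathcal{T}_H$ are refined; $\mathbb{T}(\mathcal{T}_H)$ is the set of meshes obtained from $\mathcal{T}_H$ by finitely many NVB steps, $\mathbb{T}:=\mathbb{T}(\mathcal{T}_0)$. Each $\mathcal{T}_H\in\mathbb{T}$ is associated with a finite-dimensional subspace $\mathcal{X}_H\subset\mathcal{X}$, nested: $\mathcal{X}_H\subseteq\mathcal{X}_h$ if $\mathcal{T}_h\in\mathbb{T}(\mathcal{T}_H)$. Write $u_H^\star:=u^\star_{\mathcal{X}_H}$. Zarantonello map: for $\delta>0$, $w_H\in\mathcal{X}_H$, $\Phi_H(\delta;w_H)\in\mathcal{X}_H$ is the unique solution of $\langle\!\langle\Phi_H(\delta;w_H),v_H\rangle\!\rangle=\langle\!\langle w_H,v_H\rangle\!\rangle+\delta[F(v_H)-\langle\mathcal{A}w_H,v_H\rangle]$ for all $v_H\in\mathcal{X}_H$. Algebraic solver: there is $0<q_{\mathrm{alg}}<1$ and for each $\mathcal{T}_H$ a map $\Psi_H:\mathcal{X}'\times\mathcal{X}_H\to\mathcal{X}_H$ such that for every $\varphi\in\mathcal{X}'$, with $w_H^\star\in\mathcal{X}_H$ solving $\langle\!\langle w_H^\star,v_H\rangle\!\rangle=\varphi(v_H)$ for all $v_H\in\mathcal{X}_H$, one has $|||w_H^\star-\Psi_H(\varphi;w_H)|||\le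 q_{\mathrm{alg}}|||w_H^\star-w_H|||$ for all $w_H\in\mathcal{X}_H$. One writes $\Psi_H(w_H^\star;\cdot)$ for $\Psi_H(\varphi;\cdot)$. Estimator: for $\mathcal{T}_H\in\mathbb{T}$, $T\in\mathcal{T}_H$, $v_H\in\mathcal{X}_H$ a number $\eta_H(T,v_H)\ge0$ is given; $\eta_H(\mathcal{U},v_H):=(\sum_{T\in\mathcal{U}}\eta_H(T,v_H)^2)^{1/2}$ for $\mathcal{U}\subseteq\mathcal{T}_H$ and $\eta_H(v_H):=\eta_H(\mathcal{T}_H,v_H)$. Index $\ell$ refers to $\mathcal{T}_\ell$, $\mathcal{X}_\ell$, $\Phi_\ell$, $\Psi_\ell$, $\eta_\ell$, $u_\ell^\star$. Algorithm AILFEM. Input: $\mathcal{T}_0$, $0<\theta\le1$, $C_{\mathrm{mark}}\ge1$, $\lambda_{\mathrm{lin}},\lambda_{\mathrm{alg}}>0$, $i_{\min}\in\mathbb{N}$, $\delta>0$, $u_0^{0,0}\in\mathcal{X}_0$ with $|||u_0^{0,0}|||\le2M$; set $u_0^{0,\star}:=u_0^{0,\underline{i}}:=u_0^{0,0}$. For $\ell=0,1,2,\dots$: (I) For $k=1,2,\dots$: set $u_\ell^{k,0}:=u_\ell^{k-1,\underline{i}}$ and $u_\ell^{k,\star}:=\Phi_\ell(\delta;u_\ell^{k-1,\underline{i}})$ (not computed). For $i=1,2,\dots$: compute $u_\ell^{k,i}:=\Psi_\ell(u_\ell^{k,\star};u_\ell^{k,i-1})$ and $\eta_\ell(u_\ell^{k,i})$;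 terminate the $i$-loop with $\underline{i}[\ell,k]:=i$ if $|||u_\ell^{k,i-1}-u_\ell^{k,i}|||\le\lambda_{\mathrm{alg}}[\lambda_{\mathrm{lin}}\eta_\ell(u_\ell^{k,i})+|||u_\ell^{k,i}-u_\ell^{k,0}|||]$ and $i_{\min}\le i$. Write $u_\ell^{k,\underline{i}}:=u_\ell^{k,\underline{i}[\ell,k]}$. Terminate the $k$-loop with $\underline{k}[\ell]:=k$ if $\mathcal{E}(u_\ell^{k,0})-\mathcal{E}(u_\ell^{k,\underline{i}})\le\lambda_{\mathrm{lin}}^2\eta_\ell(u_\ell^{k,\underline{i}})^2$ and $|||u_\ell^{k,\underline{i}}|||\le2M$. (II) Choose $\mathcal{M}_\ell\subseteq\mathcal{T}_\ell$ with $\theta\,\eta_\ell(u_\ell^{\underline{k},\underline{i}})^2\le\eta_\ell(\mathcal{M}_\ell,u_\ell^{\underline{k},\underline{i}})^2$ and $\#\mathcal{M}_\ell\le C_{\mathrm{mark}}\min\{\#\mathcal{U}:\mathcal{U}\subseteq\mathcal{T}_\ell,\ \theta\eta_\ell(u_\ell^{\underline{k},\underline{i}})^2\le\eta_\ell(\mathcal{U},u_\ell^{\underline{k},\underline{i}})^2\}$. (III) $\mathcal{T}_{\ell+1}:=\mathtt{refine}(\mathcal{T}_\ell,\mathcal{M}_\ell)$ and $u_{\ell+1}^{0,0}:=u_{\ell+1}^{0,\underline{i}}:=u_{\ell+1}^{0,\star}:=u_\ell^{\underline{k},\underline{i}}$. Index set: $\mathcal{Q}:=\{(\ell,k,i)\in\mathbb{N}_0^3: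 u_\ell^{k,i}\text{ is used in the algorithm}\}$; $\underline{k}[\ell]:=\sup\{k\in\mathbb{N}:(\ell,k,0)\in\mathcal{Q}\}$, $\underline{i}[\ell,k]:=\sup\{i\in\mathbb{N}:(\ell,k,i)\in\mathcal{Q}\}$; ''$(\ell,k,\underline{i})\in\mathcal{Q}$'' means $(\ell,k,\underline{i}[\ell,k])\in\mathcal{Q}$. *)

(* Defs.v *)
From HB Require Import structures.
From mathcomp Require Import all_boot all_order all_algebra.
From mathcomp Require Import all_classical all_reals topology normedtype.
Set Implicit Arguments. Unset Strict Implicit. Unset Printing Implicit Defensive.
Import Order.TTheory GRing.Theory Num.Theory.
Import numFieldNormedType.Exports.
Local Open Scope classical_set_scope.
Local Open Scope ring_scope.

Section Hilbert.
Context {R : realType} {V : lmodType R}.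
Variable ip : V -> V -> R.

Definition hnorm (v : V) : R := Num.sqrt (ip v v).

Definition is_inner_product : Prop :=
  [/\ (forall u v, ip u v = ip v u),
      (forall a u v w, ip (a *: u + v) w = a * ip u w + ip v w)
    & (forall v, v != 0 -> 0 < ip v v)].

Definition hcomplete : Prop :=
  forall x : nat -> V,
    (forall e : R, 0 < e -> exists N : nat, forall m n : nat,
        (N <= m)%N -> (N <= n)%N -> hnorm (x m - x n) < e) ->
    exists x0 : V, forall e : R, 0 < e -> exists N : nat, forall n : nat,
        (N <= n)%N -> hnorm (x n - x0) < e.

Definition is_Hilbert : Prop := is_inner_product /\ hcomplete.

Definition in_dual (phi : V -> R) : Prop :=
  (forall a u v, phi (a *: u + v) = a * phi u + phi v) /\
  (exists C : R, forall v, `|phi v| <= C * hnorm v).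

Definition dual_norm (phi : V -> R) : R :=
  sup [set `|phi v| | v in [set v | hnorm v <= 1]].

Definition fd_subspace (XH : set V) : Prop :=
  [/\ XH 0,
      (forall (a : R) u v, XH u -> XH v -> XH (a *: u + v))
    & exists s : seq V, (forall x, x \in s -> XH x) /\
        forall x, XH x -> exists c : nat -> R,
          x = \sum_(i < size s) c i *: s`_i].

Variables (A : V -> V -> R) (F : V -> R).
(* A : X -> X', written A w v = <A w, v> ; F in X' *)

Definition strongly_monotone (alpha : R) : Prop :=
  0 < alpha /\
  forall v w, alpha * hnorm (v - w) ^+ 2 <= A v (v - w) - A w (v - w).

Definition loc_lipschitz (L : R -> R) : Prop :=
  forall theta : R, 0 < theta ->
    0 < L theta /\
    forall v w phi, Num.max (hnorm v) (hnorm (v - w)) <= theta ->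
      A v phi - A w phi <= L theta * hnorm (v - w) * hnorm phi.

Definition potential (P : V -> R) : Prop :=
  forall w v : V,
    (fun t : R => (P (w + t *: v) - P w) / t) @ 0^' --> A w v.

Definition energy (P : V -> R) (v : V) : R := P v - F v.

Definition zarantonello (XH : set V) (delta : R) (w u : V) : Prop :=
  XH u /\ forall v, XH v -> ip u v = ip w v + delta * (F v - A w v).

(* algebraic solver with contraction factor q_alg on XH; following the
   paper's notation Psi_H(w*; .), the solver is indexed by the
   representer w* in XH of the right-hand side functional *)
Definition alg_solver (XH : set V) (qalg : R) (Psi : V -> V -> V) : Prop :=
  [/\ 0 < qalg, qalg < 1 &
      forall wstar w, XH wstar -> XH w ->
        XH (Psi wstar w) /\
        hnorm (wstar - Psi wstar w) <= qalg * hnorm (wstar - w)].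

(* Run of the k-loop (I) of AILFEM on a fixed level l (mesh T_l with
   discrete space XH, estimator eta, solver Psi), for the steps
   k' = 1, ..., K.  u k i = u_l^{k,i}, ustar k = u_l^{k,*},
   ib k = underline{i}[l,k]; u 0 0 is the initial iterate u_l^{0,0}
   with ib 0 = 0 (u_l^{0,ib} := u_l^{0,0}).  The i-loop of step k'
   terminates (i.e. (l,k',ib) in Q) with ib k' the first admissible
   index. *)
Definition inner_crit (eta : V -> R) (lamlin lamalg : R)
  (u : nat -> nat -> V) (k i : nat) : Prop :=
  hnorm (u k i.-1 - u k i) <=
    lamalg * (lamlin * eta (u k i) + hnorm (u k i - u k 0%N)).

Definition outer_stop (P : V -> R) (M : R) (eta : V -> R) (lamlin : R)
  (u : nat -> nat -> V) (ib : nat -> nat) (k : nat) : Prop :=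
  energy P (u k 0%N) - energy P (u k (ib k)) <= lamlin ^+ 2 * eta (u k (ib k)) ^+ 2
  /\ hnorm (u k (ib k)) <= 2 * M.

Definition ailfem_level_run (XH : set V) (delta : R) (Psi : V -> V -> V)
  (eta : V -> R) (lamlin lamalg : R) (imin : nat)
  (u : nat -> nat -> V) (ustar : nat -> V) (ib : nat -> nat) (K : nat) : Prop :=
  XH (u 0%N 0%N) /\ ib 0%N = 0%N /\
  forall k : nat, (1 <= k <= K)%N ->
    [/\ u k 0%N = u k.-1 (ib k.-1),
        zarantonello XH delta (u k.-1 (ib k.-1)) (ustar k),
        (forall i : nat, (1 <= i)%N -> u k i = Psi (ustar k) (u k i.-1)),
        (1 <= ib k)%N /\ inner_crit eta lamlin lamalg u k (ib k) /\ (imin <= ib k)%N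
      & (forall i : nat, (1 <= i)%N -> (i < ib k)%N ->
           ~ (inner_crit eta lamlin lamalg u k i /\ (imin <= i)%N))].

End Hilbert.

(* Main.v *)
Require Import Defs.
From HB Require Import structures.
From mathcomp Require Import all_boot all_order all_algebra.
From mathcomp Require Import all_classical all_reals topology normedtype derive.
From mathcomp Require Import ring lra.
Import Order.TTheory GRing.Theory Num.Theory.
Import numFieldNormedType.Exports.
Local Open Scope classical_set_scope.
Local Open Scope ring_scope.
Set Implicit Arguments. Unset Strict Implicit.
Lemma ipZl (R : realType) (V : lmodType R) (ip : V -> V -> R) :
  is_inner_product ip -> forall a u w, ip (a *: u) w = a * ip u w.
Proof.
move=> [hC hL hP].
have h0 : forall w, ip 0 w = 0.
  move=> w; have := hL 1 0 0 w; rewrite scaler0 addr0 mul1r => e; lra.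
by move=> a u w; have := hL a u 0 w; rewrite addr0 h0 addr0.
Qed.

Lemma ipDl (R : realType) (V : lmodType R) (ip : V -> V -> R) :
  is_inner_product ip -> forall u v w, ip (u + v) w = ip u w + ip v w.
Proof. by move=> [hC hL hP] u v w; have := hL 1 u v w; rewrite scale1r mul1r. Qed.

Lemma ipNl (R : realType) (V : lmodType R) (ip : V -> V -> R) :
  is_inner_product ip -> forall u w, ip (- u) w = - ip u w.
Proof. by move=> h u w; rewrite -scaleN1r (ipZl h) mulN1r. Qed.

Lemma ipBl (R : realType) (V : lmodType R) (ip : V -> V -> R) :
  is_inner_product ip -> forall u v w, ip (u - v) w = ip u w - ip v w.
Proof. by move=> h u v w; rewrite (ipDl h) (ipNl h). Qed.

Lemma ipC (R : realType) (V : lmodType R) (ip : V -> V -> R) :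
  is_inner_product ip -> forall u v, ip u v = ip v u.
Proof. by case. Qed.

Lemma ipZr (R : realType) (V : lmodType R) (ip : V -> V -> R) :
  is_inner_product ip -> forall a u w, ip w (a *: u) = a * ip w u.
Proof. by move=> h a u w; rewrite (ipC h) (ipZl h) (ipC h). Qed.

Lemma ipDr (R : realType) (V : lmodType R) (ip : V -> V -> R) :
  is_inner_product ip -> forall u v w, ip w (u + v) = ip w u + ip w v.
Proof. by move=> h u v w; rewrite (ipC h) (ipDl h) !(ipC h w). Qed.

Lemma ipBr (R : realType) (V : lmodType R) (ip : V -> V -> R) :
  is_inner_product ip -> forall u v w, ip w (u - v) = ip w u - ip w v.
Proof. by move=> h u v w; rewrite (ipC h) (ipBl h) !(ipC h w). Qed.

Lemma ip0l (R : realType) (V : lmodType R) (ip : V -> V -> R) :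
  is_inner_product ip -> forall w, ip 0 w = 0.
Proof. by move=> h w; rewrite -(scale0r (0:V)) (ipZl h) mul0r. Qed.

Lemma ip0r (R : realType) (V : lmodType R) (ip : V -> V -> R) :
  is_inner_product ip -> forall w, ip w 0 = 0.
Proof. by move=> h w; rewrite (ipC h) (ip0l h). Qed.

Lemma ip_ge0 (R : realType) (V : lmodType R) (ip : V -> V -> R) :
  is_inner_product ip -> forall v, 0 <= ip v v.
Proof.
move=> h v; have [->|nz] := eqVneq v 0; first by rewrite (ip0l h).
by case: h => _ _ hP; apply: ltW; apply: hP.
Qed.

Lemma ip_eq0 (R : realType) (V : lmodType R) (ip : V -> V -> R) :
  is_inner_product ip -> forall v, ip v v = 0 -> v = 0.
Proof.
move=> h v e; have [//|nz] := eqVneq v 0.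
by case: h => _ _ hP; have := hP v nz; rewrite e ltxx.
Qed.

Lemma hnorm_ge0 (R : realType) (V : lmodType R) (ip : V -> V -> R) v :
  0 <= hnorm ip v.
Proof. exact: sqrtr_ge0. Qed.

Lemma hnorm_sqr (R : realType) (V : lmodType R) (ip : V -> V -> R) :
  is_inner_product ip -> forall v, hnorm ip v ^+ 2 = ip v v.
Proof. by move=> h v; rewrite /hnorm sqr_sqrtr // (ip_ge0 h). Qed.

Lemma hnorm0 (R : realType) (V : lmodType R) (ip : V -> V -> R) :
  is_inner_product ip -> hnorm ip 0 = 0.
Proof. by move=> h; rewrite /hnorm (ip0l h) sqrtr0. Qed.

Lemma hnorm_eq0 (R : realType) (V : lmodType R) (ip : V -> V -> R) :
  is_inner_product ip -> forall v, hnorm ip v = 0 -> v = 0.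
Proof.
move=> h v e; apply: (ip_eq0 h); by rewrite -(hnorm_sqr h) e expr0n.
Qed.

Lemma hnormZ (R : realType) (V : lmodType R) (ip : V -> V -> R) :
  is_inner_product ip -> forall a v, hnorm ip (a *: v) = `|a| * hnorm ip v.
Proof.
move=> h a v; rewrite /hnorm (ipZl h) (ipZr h) mulrA -expr2 sqrtrM ?sqr_ge0 //.
by rewrite sqrtr_sqr.
Qed.

Lemma hnormN (R : realType) (V : lmodType R) (ip : V -> V -> R) :
  is_inner_product ip -> forall v, hnorm ip (- v) = hnorm ip v.
Proof. by move=> h v; rewrite -scaleN1r (hnormZ h) normrN normr1 mul1r. Qed.

Lemma cauchy_schwarz (R : realType) (V : lmodType R) (ip : V -> V -> R) :
  is_inner_product ip -> forall u v, `|ip u v| <= hnorm ip u * hnorm ip v.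
Proof.
move=> h u v.
have [->|nz] := eqVneq v 0.
  by rewrite (ip0r h) normr0 mulr_ge0 // hnorm_ge0.
have cpos : 0 < ip v v by case: h => _ _ hP; apply: hP.
set a := ip u u; set b := ip u v; set c := ip v v.
have := ip_ge0 h (u - (b / c) *: v).
rewrite !(ipBl h) !(ipBr h) !(ipZl h) !(ipZr h) (ipC h v u) -/a -/b -/c.
move=> H.
have hb : b ^+ 2 <= a * c.
  have e : b / c * (b / c * c) = b ^+2 / c by field; apply: lt0r_neq0.
  have e2 : b / c * b = b ^+2 / c by rewrite mulrAC expr2.
  rewrite e e2 in H.
  have : b ^+ 2 / c <= a by lra.
  by rewrite ler_pdivrMr.
rewrite -sqrtr_sqr /hnorm -sqrtrM ?(ip_ge0 h) //.
by rewrite ler_sqrt // mulr_ge0 // (ip_ge0 h).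
Qed.

Lemma ip_le (R : realType) (V : lmodType R) (ip : V -> V -> R) :
  is_inner_product ip -> forall u v, ip u v <= hnorm ip u * hnorm ip v.
Proof. by move=> h u v; apply: le_trans (cauchy_schwarz h u v); apply: ler_norm. Qed.

Lemma hnormD (R : realType) (V : lmodType R) (ip : V -> V -> R) :
  is_inner_product ip -> forall u v, hnorm ip (u + v) <= hnorm ip u + hnorm ip v.
Proof.
move=> h u v.
rewrite -(ler_pXn2r (n:=2)) ?nnegrE ?addr_ge0 ?hnorm_ge0 //.
rewrite (hnorm_sqr h) (ipDl h) !(ipDr h) (ipC h v u).
have := ip_le h u v; have := hnorm_sqr h u; have := hnorm_sqr h v.
move=> e1 e2; rewrite -e1 -e2; lra.
Qed.
Lemma mvt_aux (R : realType) (f df : R -> R) (c1 c2 : R) :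
  (forall t : R, is_derive t (1:R) f (df t)) ->
  exists2 c, c \in `]0, 1[%R &
   (f 1 - f 0) - (c1 + c2) = df c - (c1 + 2 * c2 * c).
Proof.
move=> hd.
pose g := f - (c1 \*: (@id R)) - (c2 \*: ((@id R) * (@id R))).
have hg : forall t : R, is_derive t (1:R) g (df t - c1 *: (1:R) - c2 *: (t *: (1:R) + t *: (1:R))).
  move=> t; rewrite /g; apply: is_deriveB.
have [|c c01 hc] := @MVT R g _ 0 1 ltr01 (fun x _ => hg x).
  apply: derivable_within_continuous => x _.
  exact: (@ex_derive _ _ _ _ _ _ _ (hg x)).
exists c => //.
have hc' : f 1 - c1 * 1 - c2 * (1*1) - (f 0 - c1 * 0 - c2*(0*0)) = (df c - c1 * 1 - c2 * (c * 1 + c * 1)) * (1 - 0) by exact hc.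
lra.
Qed.
Lemma deriv_line (R : realType) (V : lmodType R) (A : V -> V -> R) (P : V -> R)
  (w d : V) (t : R) : potential A P ->
  is_derive t (1:R) (fun s : R => P (w + s *: d)) (A (w + t *: d) d).
Proof.
move=> pot.
have hc := pot (w + t *: d) d.
have E : (fun h : R => h^-1 *: (((fun s : R => P (w + s *: d)) \o shift t) (h *: (1:R)) - P (w + t *: d)))
   = (fun h : R => (P (w + t *: d + h *: d) - P (w + t *: d)) / h).
  apply/funext => h /=; rewrite [_%:A]mulr1 scalerDl addrA -[LHS]/(h^-1 * _) mulrC; congr ((P _ - _) / _); rewrite -addrA [_ + t *: d]addrC addrA.
  by rewrite -addrA -scalerDl addrC.
apply: DeriveDef.
  by rewrite /derivable E; apply/cvgP: hc.
by rewrite /derive E; apply: cvg_lim.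
Qed.
Lemma lin0 (R : realType) (V : lmodType R) (phi : V -> R) :
  (forall a u v, phi (a *: u + v) = a * phi u + phi v) -> phi 0 = 0.
Proof. by move=> hl; have := hl 1 0 0; rewrite scaler0 addr0 mul1r => e; lra. Qed.

Lemma linZ (R : realType) (V : lmodType R) (phi : V -> R) :
  (forall a u v, phi (a *: u + v) = a * phi u + phi v) ->
  forall a u, phi (a *: u) = a * phi u.
Proof. by move=> hl a u; have := hl a u 0; rewrite addr0 (lin0 hl) addr0. Qed.

Lemma linD (R : realType) (V : lmodType R) (phi : V -> R) :
  (forall a u v, phi (a *: u + v) = a * phi u + phi v) ->
  forall u v, phi (u + v) = phi u + phi v.
Proof. by move=> hl u v; have := hl 1 u v; rewrite scale1r mul1r. Qed.

Lemma energy_lower (R : realType) (V : lmodType R) (ip : V -> V -> R)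
  (A : V -> V -> R) (P : V -> R) (alpha : R) (w d : V) :
  is_inner_product ip -> (forall v, in_dual ip (A v)) ->
  strongly_monotone ip A alpha -> potential A P ->
  A w d + alpha / 2 * hnorm ip d ^+ 2 <= P (w + d) - P w.
Proof.
move=> hip hA [a0 hsm] pot.
have [c c01 hc] := mvt_aux (A w d) (alpha / 2 * hnorm ip d ^+ 2) (deriv_line w d ^~ pot).
move: hc; rewrite scale1r scale0r addr0.
have c0 : 0 < c by move: c01; rewrite in_itv /= => /andP[].
have key : alpha * c * hnorm ip d ^+ 2 <= A (w + c *: d) d - A w d.
  have := hsm (w + c *: d) w.
  rewrite addrAC subrr add0r (hnormZ hip) gtr0_norm //.
  have [hl _] := hA (w + c *: d); have [hl' _] := hA w.
  rewrite (linZ hl) (linZ hl') => H.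
  rewrite -(ler_pM2l c0).
  have E1 : c * (alpha * c * hnorm ip d ^+ 2) = alpha * (c * hnorm ip d) ^+ 2 by ring.
  have E2 : c * (A (w + c *: d) d - A w d) = c * A (w + c *: d) d - c * A w d by ring.
  by rewrite E1 E2.
move=> e; lra.
Qed.

Lemma energy_upper (R : realType) (V : lmodType R) (ip : V -> V -> R)
  (A : V -> V -> R) (P : V -> R) (L : R -> R) (theta : R) (w d : V) :
  is_inner_product ip -> 0 < theta -> loc_lipschitz ip A L -> potential A P ->
  (forall c, 0 <= c <= 1 -> Num.max (hnorm ip (w + c *: d)) (hnorm ip (c *: d)) <= theta) ->
  P (w + d) - P w <= A w d + L theta / 2 * hnorm ip d ^+ 2.
Proof.
move=> hip th0 hL pot hb.
have [c c01 hc] := mvt_aux (A w d) (L theta / 2 * hnorm ip d ^+ 2) (deriv_line w d ^~ pot).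
move: hc; rewrite scale1r scale0r addr0.
have [c0 c1] : 0 < c /\ c < 1 by move: c01; rewrite in_itv /= => /andP[].
have [_ hl] := hL theta th0.
have key : A (w + c *: d) d - A w d <= L theta * c * hnorm ip d ^+ 2.
  have c01' : 0 <= c <= 1 by rewrite !ltW.
  have e0 : w + c *: d - w = c *: d by rewrite addrAC subrr add0r.
  have := hl (w + c *: d) w d; rewrite e0 => /(_ (hb c c01')).
  rewrite (hnormZ hip) gtr0_norm // => H.
  apply: (le_trans H). rewrite expr2. by rewrite !mulrA.
move=> e; lra.
Qed.

Lemma dual_bound (R : realType) (V : lmodType R) (ip : V -> V -> R) (phi : V -> R) :
  is_inner_product ip ->
  (forall a u v, phi (a *: u + v) = a * phi u + phi v) ->
  (exists C : R, forall v, `|phi v| <= C * hnorm ip v) ->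
  forall v, `|phi v| <= dual_norm ip phi * hnorm ip v.
Proof.
move=> hip hl [C hC] v.
have ub : has_ubound [set `|phi y| | y in [set y | hnorm ip y <= 1]].
  exists `|C| => _ [y /= hy <-].
  apply: (le_trans (hC y)); apply: (le_trans (ler_norm _)).
  rewrite normrM (ger0_norm (hnorm_ge0 _ _)).
  by rewrite -[X in _ <= X]mulr1 ler_wpM2l.
have [n0|npos] := eqVneq (hnorm ip v) 0.
  by rewrite (hnorm_eq0 hip n0) (lin0 hl) normr0 (hnorm0 hip) mulr0.
have np : 0 < hnorm ip v by rewrite lt_def npos hnorm_ge0.
have h1 : hnorm ip ((hnorm ip v)^-1 *: v) = 1.
  by rewrite (hnormZ hip) ger0_norm ?invr_ge0 ?hnorm_ge0 // mulVf.
have H := ub_le_sup ub.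
have : `|phi ((hnorm ip v)^-1 *: v)| <= dual_norm ip phi.
  by apply: H; exists ((hnorm ip v)^-1 *: v) => //=; rewrite h1.
rewrite (linZ hl) normrM ger0_norm ?invr_ge0 ?hnorm_ge0 //.
by rewrite mulrC -ler_pdivlMr ?invr_gt0 // invrK.
Qed.

Theorem lemma7 (R : realType) (V : lmodType R) (ip : V -> V -> R)
  (A : V -> V -> R) (F : V -> R) (P : V -> R) (alpha : R) (L : R -> R)
  (XH : set V) (qalg : R) (Psi : V -> V -> V) (eta : V -> R)
  (lamlin lamalg delta : R) (imin : nat)
  (u : nat -> nat -> V) (ustar : nat -> V) (ib : nat -> nat) (k : nat) :
  is_Hilbert ip ->
  (forall w, in_dual ip (A w)) -> in_dual ip F ->
  (exists v, A 0 v != F v) ->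
  strongly_monotone ip A alpha ->
  loc_lipschitz ip A L ->
  potential A P ->
  fd_subspace XH ->
  alg_solver ip XH qalg Psi ->
  (forall v, 0 <= eta v) ->
  0 < lamlin -> 0 < lamalg -> (1 <= imin)%N ->
  let M := dual_norm ip (fun v => F v - A 0 v) / alpha in
  let tau := M + 3 * M * Num.sqrt (L (3 * M) / alpha) in
  hnorm ip (u 0%N 0%N) <= 2 * M ->
  (* the k-loop of level l runs up to step k+1, and the i-loop of step
     k+1 terminates, i.e. (l,k+1,ib) in Q *)
  ailfem_level_run ip A F XH delta Psi eta lamlin lamalg imin u ustar ib k.+1 ->
  (* k < kbar[l]: the k-loop did not stop at any step 1..k *)
  (forall j : nat, (1 <= j <= k)%N -> ~ outer_stop ip F P M eta lamlin u ib j) ->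
  hnorm ip (u k (ib k)) <= tau ->
  qalg ^+ imin <= 1 / 3 ->
  0 < delta -> delta < 1 / L (5 * tau) -> delta < 2 * alpha / L (2 * tau) ^+ 2 ->
  let d := hnorm ip (u k.+1 (ib k.+1) - u k (ib k)) in
  0 <= (1 / (2 * delta) - L (5 * tau) / 2) * d ^+ 2 /\
  (1 / (2 * delta) - L (5 * tau) / 2) * d ^+ 2
    <= energy F P (u k (ib k)) - energy F P (u k.+1 (ib k.+1)) /\
  energy F P (u k (ib k)) - energy F P (u k.+1 (ib k.+1))
    <= (1 / (delta * (1 - qalg ^+ imin)) - alpha / 2) * d ^+ 2.
Proof.
move=> hH hA hF [v0 hv0] hsm hL pot hfd hsolv heta hll hla himin M tau hu00 run nstop hw hq d0 dL dA d.
have hip := hH.1.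
have [a0 _] := hsm.
pose phi := fun v => F v - A 0 v.
have [hFl [CF hFb]] := hF.
have [hA0l [CA hA0b]] := hA 0.
have phil : forall a u v, phi (a *: u + v) = a * phi u + phi v.
  by move=> a' u1 v1; rewrite /phi hFl hA0l; ring.
have phib : exists C : R, forall v, `|phi v| <= C * hnorm ip v.
  exists (CF + CA) => v; rewrite /phi mulrDl.
  apply: (le_trans (ler_normB _ _)); exact: lerD.
have hdb := dual_bound hip phil phib.
set dn := dual_norm ip phi in hdb.
have hMdn : M = dn / alpha by [].
have phiv0 : phi v0 != 0 by rewrite /phi subr_eq0 eq_sym.
have nv0 : 0 < hnorm ip v0.
  rewrite lt_def hnorm_ge0 andbT; apply/eqP => n0.
  by move: phiv0; rewrite (hnorm_eq0 hip n0) (lin0 phil) eqxx.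
have dnpos : 0 < dn.
  have := hdb v0; have : 0 < `|phi v0| by rewrite normr_gt0.
  move=> h1 h2; have := lt_le_trans h1 h2; by rewrite pmulr_lgt0.
have Mpos : 0 < M by rewrite hMdn divr_gt0.
have tauM : M <= tau.
  rewrite /tau -{1}[M]addr0 lerD2l; apply: mulr_ge0; last exact: sqrtr_ge0.
  by apply: mulr_ge0 => //; exact: ltW.
have taupos : 0 < tau by apply: lt_le_trans Mpos tauM.
have t5 : 0 < 5 * tau by rewrite mulr_gt0.
set LL := L (5 * tau).
have [LLpos hlip] := hL _ t5.
have aLL : alpha <= LL.
  pose v1 := (5 * tau / hnorm ip v0) *: v0.
  have nv1 : hnorm ip v1 = 5 * tau.
    rewrite /v1 (hnormZ hip) ger0_norm; last by rewrite divr_ge0 // ltW.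
    by rewrite divfK // gt_eqF.
  have := (hsm.2 v1 0); rewrite subr0 nv1 => h1.
  have := hlip v1 0 v1; rewrite subr0 nv1 maxxx lexx => /(_ isT) h2.
  have h3 := le_trans h1 h2.
  have : alpha * (5 * tau) ^+ 2 <= LL * (5 * tau) ^+ 2.
    by apply: (le_trans h3); rewrite -mulrA -expr2.
  by rewrite ler_pM2r // exprn_gt0.
have [hX0 [hib0 hstep]] := run.
have [hXz hXlin _] := hfd.
have [q0 q1 hPsi] := hsolv.
have inv : forall j, (j <= k.+1)%N -> XH (u j (ib j)) /\ ((1 <= j)%N -> forall i, XH (u j i)).
  elim=> [_|j IH hj]; first by rewrite hib0; split.
  have [e0 [hXs _] hps _ _] := hstep j.+1 hj.
  have [IH1 _] := IH (ltnW hj).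
  have all_i : forall i, XH (u j.+1 i).
    elim=> [|i IHi]; first by rewrite e0.
    by rewrite hps //; have [] := hPsi (ustar j.+1) (u j.+1 i) hXs IHi.
  by split.
have [e0 [hXx hzar] hps [ib1 [_ ibm]] _] := hstep k.+1 (leqnn _).
simpl in e0, hzar.
set w := u k (ib k) in e0 hzar hw d *.
set x := ustar k.+1 in hXx hzar hps *.
set u' := u k.+1 (ib k.+1) in d *.
have hXw : XH w by have [] := inv k (leqnSn _).
have hXu' : XH u' by have [] := inv k.+1 (leqnn _).
have hXd : XH (u' - w) by have := hXlin (-1) w u' hXw hXu'; rewrite scaleN1r addrC.
have hXxw : XH (x - w) by have := hXlin (-1) w x hXw hXx; rewrite scaleN1r addrC.
have contr : forall i, hnorm ip (x - u k.+1 i) <= qalg ^+ i * hnorm ip (x - w).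
  elim=> [|i IHi]; first by rewrite e0 expr0 mul1r.
  have hXi : XH (u k.+1 i) by have [_ ] := inv k.+1 (leqnn _); apply.
  rewrite hps // exprS -mulrA.
  have [_ h] := hPsi x (u k.+1 i) hXx hXi.
  by apply: (le_trans h); rewrite ler_wpM2l // ltW.
set rho := qalg ^+ ib k.+1.
have rho0 : 0 <= rho by rewrite exprn_ge0 // ltW.
have rhoq : rho <= qalg ^+ imin by rewrite /rho ler_wiXn2l // ltW.
set a := hnorm ip (x - w).
set e := hnorm ip (x - u').
have a0' : 0 <= a by apply: hnorm_ge0.
have e0' : 0 <= e by apply: hnorm_ge0.
have D0 : 0 <= d by apply: hnorm_ge0.
have hea : e <= rho * a by apply: contr.
have hxw : x - w = (x - u') + (u' - w) by rewrite addrA subrK.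
have haed : a <= e + d by rewrite /a hxw; apply: hnormD.
have hdae : d <= a + e.
  rewrite /d; have -> : u' - w = (x - w) + - (x - u') by rewrite opprB [RHS]addrC addrA subrK.
  by apply: (le_trans (hnormD hip _ _)); rewrite hnormN.
have hdL : delta * LL < 1 by rewrite -ltr_pdivlMr.
have hda : delta * alpha <= 1.
  by apply: le_trans (ltW hdL); rewrite ler_wpM2l // ltW.
have a2 : a ^+ 2 <= delta * (dn * a + LL * tau * a).
  rewrite /a (hnorm_sqr hip) (ipBl hip) (hzar _ hXxw) addrAC subrr add0r.
  apply: ler_wpM2l; first exact: ltW.
  have -> : F (x - w) - A w (x - w) = phi (x - w) + (A 0 (x - w) - A w (x - w)).
    by rewrite /phi; ring.
  apply: lerD; first by apply: le_trans (ler_norm _) (hdb _).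
  have := hlip 0 w (x - w); rewrite sub0r (hnormN hip) (hnorm0 hip).
  have hw5 : Num.max 0 (hnorm ip w) <= 5 * tau.
    rewrite ge_max; apply/andP; split; first exact: ltW.
    by apply: (le_trans hw); rewrite ler_peMl // ?ltW //; lra.
  move=> /(_ hw5) h; apply: (le_trans h).
  by rewrite -/a ler_wpM2r // ler_wpM2l // ltW.
have abd : a <= delta * (dn + LL * tau).
  have [az|apos] := eqVneq a 0.
    by rewrite az; apply: mulr_ge0; [exact: ltW | apply: addr_ge0; [exact: ltW | apply: mulr_ge0; exact: ltW]].
  have apos' : 0 < a by rewrite lt_def apos a0'.
  rewrite -(ler_pM2r apos').
  have E : delta * (dn + LL * tau) * a = delta * (dn * a + LL * tau * a) by ring.
  by rewrite E -expr2.
have hdn : dn = alpha * M by rewrite hMdn mulrC divfK ?gt_eqF.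
have t1 : delta * dn <= M.
  by rewrite hdn mulrA; have := ler_wpM2r (ltW Mpos) hda; rewrite mul1r.
have t2 : delta * (LL * tau) <= tau.
  by rewrite mulrA; have := ler_wpM2r (ltW taupos) (ltW hdL); rewrite mul1r.
have a2t : a <= 2 * tau by move: abd; rewrite mulrDr; lra.
set qm := qalg ^+ imin in rhoq hq *.
have hrho : rho <= 1/3 by apply: le_trans hq.
have ha3 : rho * a <= a / 3 by nra.
have d4 : d <= 4 * tau by lra.
pose d' := u' - w.
have wu : w + d' = u' by rewrite /d' addrC subrK.
have EL := @energy_lower _ _ _ _ P _ w d' hip hA hsm pot.
have hb : forall c, 0 <= c <= 1 ->
    Num.max (hnorm ip (w + c *: d')) (hnorm ip (c *: d')) <= 5 * tau.
  move=> c /andP[c0 c1]; rewrite ge_max (hnormZ hip) ger0_norm // -/d.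
  have cd : c * d <= d by rewrite ler_piMl.
  apply/andP; split; last by lra.
  apply: (le_trans (hnormD hip _ _)); rewrite (hnormZ hip) ger0_norm // -/d; lra.
have EU := @energy_upper _ _ _ _ P _ _ w d' hip t5 hL pot hb.
rewrite wu -/d -/LL in EL EU.
have eF : F u' = F d' + F w by rewrite -(linD hFl) /d' subrK.
have ey : energy F P w - energy F P u' = F d' - (P u' - P w).
  by rewrite /energy eF; ring.
rewrite ey.
set z := F d' - A w d'.
set t := ip (x - u') d'.
have ht : `|t| <= e * d by apply: cauchy_schwarz.
move: ht; rewrite ler_norml => /andP[ht1 ht2].
have hs : delta * z = t + d ^+ 2.
  have h1 : ip (x - w) d' = delta * z.
    by rewrite (ipBl hip) (hzar _ hXd) /z; ring.
  by rewrite -h1 hxw (ipDl hip) -/t -/d' (hnorm_sqr hip).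
have ehalf : e <= d / 2 by nra.
have eq0 : e * (1 - qm) <= qm * d by nra.
have dpos : 0 < delta := d0.
have idl : delta * (1 / delta) = 1 by field; rewrite gt_eqF.
have id0 : 0 <= 1 / delta by rewrite divr_ge0 // ltW.
have LLi : LL < 1 / delta by rewrite ltr_pdivlMr // mulrC.
have q01 : 0 < 1 - qm by lra.
split.
  apply: mulr_ge0; last exact: sqr_ge0.
  have -> : 1 / (2 * delta) = (1 / delta) / 2 by field; rewrite gt_eqF.
  lra.
split.
  have hz : d ^+ 2 / 2 <= delta * z by nra.
  have : (1 / delta) * (d ^+ 2 / 2) <= z.
    have := ler_wpM2l id0 hz.
    have -> : 1 / delta * (delta * z) = z by rewrite mulrA [1 / delta * _]mulrC idl mul1r.
    done.
  have -> : 1 / (2 * delta) = (1 / delta) / 2 by field; rewrite gt_eqF.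
  move=> h; rewrite /z in h; lra.
have hz : delta * (1 - qm) * z <= d ^+ 2 by nra.
set K := 1 / (delta * (1 - qm)).
have K0 : 0 <= K by rewrite divr_ge0 // mulr_ge0 // ltW.
have Ki : K * (delta * (1 - qm)) = 1.
  by rewrite /K; field; rewrite !gt_eqF.
have : z <= K * d ^+ 2.
  have := ler_wpM2l K0 hz.
  have -> : K * (delta * (1 - qm) * z) = z by rewrite mulrA Ki mul1r.
  done.
move=> h; rewrite /z in h; lra.
Qed.
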